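(* Let $C>0$ and $\delta>0$, let $f \in C((0,\infty);(0,\infty))$ be asymptotically increasing with $\lim_{x\to\infty} f(x)/x = \infty$, and let $\psi \in C([-\delta,0];(0,\infty))$. Consider \[ z'(t) = C\int_{t-\delta}^t f(z(s))\,ds, \quad t\ge 0; \qquad z(t)=\psi(t), \quad t\in[-\delta,0]. \] If the solution satisfies $z \in C([-\delta,\infty);(0,\infty))$ and $\bar F(x) = \int_0^x f(s)\,ds$ for $x>0$, then \[ \lim_{t\to\infty} \frac{\bar F(z(t-\delta))}{\bar F(z(t))} = 0. \]
   Context: ''$f$ is asymptotically increasing'' means that there is a continuous increasing function $\phi:(0,\infty)\to(0,\infty)$ with $f(x)/\phi(x)\to 1$ as $x\to\infty$. *)

(* Defs.v *)
From Stdlib Require Import Reals.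
From Coquelicot Require Import Coquelicot.
Open Scope R_scope.

Definition asymptotically_increasing (f : R -> R) : Prop :=
  exists phi : R -> R,
    (forall x, 0 < x -> continuous phi x) /\
    (forall x, 0 < x -> 0 < phi x) /\
    (forall x y, 0 < x -> x < y -> phi x < phi y) /\
    is_lim (fun x => f x / phi x) p_infty 1.

Definition continuous_within (D : R -> Prop) (g : R -> R) (x : R) : Prop :=
  filterlim g (within D (locally x)) (locally (g x)).

(* Main.v *)
Require Import Defs.
From Stdlib Require Import Reals Lra Psatz Classical.
From Coquelicot Require Import Coquelicot.
Open Scope R_scope.

Lemma mvt_lb (g dg : R -> R) a b c : a <= b ->
  (forall x, a <= x <= b -> is_derive g x (dg x)) ->
  (forall x, a <= x <= b -> c <= dg x) -> c * (b - a) <= g b - g a.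
Proof.
  intros Hab Hd Hc.
  destruct (MVT_gen g a b dg) as [x [Hx Heq]].
  - intros x Hx. rewrite Rmin_left in Hx by lra. rewrite Rmax_right in Hx by lra.
    apply Hd; lra.
  - intros x Hx. rewrite Rmin_left in Hx by lra. rewrite Rmax_right in Hx by lra.
    apply continuity_pt_filterlim. apply (ex_derive_continuous (K:=R_AbsRing) (V:=R_NormedModule)).
    eexists. apply Hd; lra.
  - rewrite Rmin_left in Hx by lra. rewrite Rmax_right in Hx by lra.
    rewrite Heq. apply Rmult_le_compat_r; [lra|]. apply Hc; lra.
Qed.

Lemma Fbar_chasles (f Fbar : R -> R) a b : 0 < a -> a <= b ->
  (forall x, 0 < x -> continuous f x) ->
  (forall x, 0 < x -> is_RInt_gen f (at_right 0) (at_point x) (Fbar x)) ->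
  Fbar b = Fbar a + RInt f a b.
Proof.
  intros Ha Hab Hc HF.
  assert (Hex : ex_RInt f a b).
  { apply (ex_RInt_continuous (V:=R_CompleteNormedModule)). intros x Hx.
    rewrite Rmin_left in Hx by lra. rewrite Rmax_right in Hx by lra. apply Hc; lra. }
  assert (H1 : is_RInt_gen f (at_right 0) (at_point b) (plus (Fbar a) (RInt f a b))).
  { apply (is_RInt_gen_Chasles (V:=R_NormedModule) f a); try apply _. apply HF; lra.
    apply is_RInt_gen_at_point. apply (RInt_correct (V:=R_CompleteNormedModule)). exact Hex. }
  assert (H2 := HF b ltac:(lra)).
  apply (is_RInt_gen_unique (V:=R_CompleteNormedModule)) in H1. apply (is_RInt_gen_unique (V:=R_CompleteNormedModule)) in H2.
  rewrite <- H2, H1. reflexivity.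
Qed.

Lemma lim_ball (g : R -> R) (l : R) (e : R) : 0 < e -> is_lim g p_infty l ->
  exists M, forall x, M < x -> Rabs (g x - l) < e.
Proof.
  intros He H.
  destruct (H (fun y => Rabs (y - l) < e)) as [M HM].
  - simpl. exists (mkposreal e He). intros y Hy. exact Hy.
  - exists M. exact HM.
Qed.

Lemma lim_pinf (g : R -> R) (K : R) : is_lim g p_infty p_infty ->
  exists M, forall x, M < x -> K < g x.
Proof.
  intros H. destruct (H (fun y => K < y)) as [M HM].
  - simpl. exists K. auto.
  - exists M. exact HM.
Qed.

Lemma RInt_const_R (a b c : R) : RInt (fun _ => c) a b = (b - a) * c.
Proof. rewrite RInt_const. reflexivity. Qed.

Theorem lemma6p2 (C delta : R) (f psi z Fbar : R -> R) :
  0 < C -> 0 < delta ->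
  (forall x, 0 < x -> continuous f x) ->
  (forall x, 0 < x -> 0 < f x) ->
  asymptotically_increasing f ->
  is_lim (fun x => f x / x) p_infty p_infty ->
  (forall t, -delta <= t <= 0 ->
     continuous_within (fun s => -delta <= s <= 0) psi t) ->
  (forall t, -delta <= t <= 0 -> 0 < psi t) ->
  (forall t, -delta <= t ->
     continuous_within (fun s => -delta <= s) z t) ->
  (forall t, -delta <= t -> 0 < z t) ->
  (forall t, -delta <= t <= 0 -> z t = psi t) ->
  (forall t, 0 < t ->
     is_derive z t (C * RInt (fun s => f (z s)) (t - delta) t)) ->
  filterlim (fun h => (z h - z 0) / h) (at_right 0)
    (locally (C * RInt (fun s => f (z s)) (0 - delta) 0)) ->
  (forall x, 0 < x -> is_RInt_gen f (at_right 0) (at_point x) (Fbar x)) ->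
  is_lim (fun t => Fbar (z (t - delta)) / Fbar (z t)) p_infty 0.
Proof.
  intros HC Hd Hfc Hfpos Hasym Hfx _ _ _ Hzpos _ Hder _ HF.
  assert (Hzp : forall t, 0 < t -> 0 < z t) by (intros; apply Hzpos; lra).
  assert (Hczp : forall t, 0 < t -> continuous z t).
  { intros t Ht. apply (ex_derive_continuous (K:=R_AbsRing) (V:=R_NormedModule)).
    eexists. apply Hder; lra. }
  assert (Hcfz : forall t, 0 < t -> continuous (fun s => f (z s)) t).
  { intros t Ht. apply (continuous_comp z f). apply Hczp; lra. apply Hfc. apply Hzp; lra. }
  assert (Hexfz : forall a b, 0 < a -> a <= b -> ex_RInt (fun s => f (z s)) a b).
  { intros a b Ha Hab. apply (ex_RInt_continuous (V:=R_CompleteNormedModule)). intros x Hx.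
    rewrite Rmin_left in Hx by lra. rewrite Rmax_right in Hx by lra. apply Hcfz; lra. }
  assert (Hexf : forall a b, 0 < a -> a <= b -> ex_RInt f a b).
  { intros a b Ha Hab. apply (ex_RInt_continuous (V:=R_CompleteNormedModule)). intros x Hx.
    rewrite Rmin_left in Hx by lra. rewrite Rmax_right in Hx by lra. apply Hfc; lra. }
  assert (Hnn : forall a b, 0 < a -> a <= b -> 0 <= RInt (fun s => f (z s)) a b).
  { intros a b Ha Hab. apply RInt_ge_0; auto. intros x Hx. left. apply Hfpos, Hzp; lra. }
  assert (Hmono : forall a b, delta < a -> a <= b -> z a <= z b).
  { intros a b Ha Hab.
    assert (H := mvt_lb z (fun t => C * RInt (fun s => f (z s)) (t - delta) t) a b 0 Hab).
    cut (0 * (b - a) <= z b - z a). lra.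
    apply H. intros x Hx. apply Hder; lra.
    intros x Hx. apply Rmult_le_pos. lra. apply Hnn; lra. }
  assert (Hinf : forall L, exists T, forall t, T <= t -> L <= z t).
  { intros L. destruct (classic (exists T, forall t, T <= t -> L <= z t)) as [H|H]; auto.
    exfalso.
    assert (Hb : forall t, delta < t -> z t < L).
    { intros t Ht. apply Rnot_le_lt. intros Hle. apply H. exists t.
      intros t' Ht'. apply Rle_trans with (z t); auto. }
    destruct (continuity_ab_min f (z (2*delta)) L) as [mx [Hmx1 Hmx2]].
    { left. apply Hb; lra. }
    { intros c Hc. apply continuity_pt_filterlim. apply Hfc.
      assert (0 < z (2*delta)) by (apply Hzp; lra). lra. }
    set (m := f mx).
    assert (Hm : 0 < m).
    { apply Hfpos. assert (0 < z (2*delta)) by (apply Hzp; lra). lra. }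
    set (t := 3 * delta + L / (C * delta * m) + 1).
    assert (HCdm : 0 < C * delta * m) by (apply Rmult_lt_0_compat; [nra|lra]).
    assert (HL : 0 <= L) by (assert (0 < z (2*delta)) by (apply Hzp; lra); lra).
    assert (Ht : 3 * delta <= t).
    { unfold t. assert (0 <= L / (C * delta * m)). apply Rdiv_le_0_compat; lra. lra. }
    assert (Hlb := mvt_lb z (fun t => C * RInt (fun s => f (z s)) (t - delta) t) (3*delta) t
                  (C * delta * m) Ht).
    assert (Hz3 : 0 < z (3 * delta)) by (apply Hzp; lra).
    assert (Hzt : z t < L) by (apply Hb; lra).
    assert (C * delta * m * (t - 3 * delta) = L + C * delta * m).
    { unfold t. field. lra. }
    assert (C * delta * m * (t - 3 * delta) <= z t - z (3 * delta)).
    { apply Hlb. intros x Hx. apply Hder; lra.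
      intros x Hx. rewrite Rmult_assoc. apply Rmult_le_compat_l. lra.
      replace (delta * m) with (RInt (fun _ => m) (x - delta) x)
        by (rewrite RInt_const_R; replace (x - (x - delta)) with delta by ring; reflexivity).
      apply RInt_le. lra. apply ex_RInt_const. apply Hexfz; lra.
      intros y Hy. unfold m. apply Hmx1. split.
      apply Hmono; lra. left. apply Hb; lra. }
    lra. }
  assert (Hgrow : forall K, 0 < K -> exists T, forall t, T <= t ->
             K * z (t - delta) <= z t - z (t - delta)).
  { intros K HK.
    set (K' := 4 * K / (C * delta * delta)).
    assert (HK' : 0 < K').
    { unfold K'. apply Rdiv_lt_0_compat. lra.
      apply Rmult_lt_0_compat; [apply Rmult_lt_0_compat|]; lra. }
    destruct (lim_pinf _ K' Hfx) as [N HN].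
    destruct (Hinf (Rabs N + 1)) as [T1 HT1].
    exists (Rmax (T1 + delta) (3 * delta)). intros t Ht.
    assert (Ht1 : T1 + delta <= t) by (eapply Rle_trans; [apply Rmax_l|exact Ht]).
    assert (Ht2 : 3 * delta <= t) by (eapply Rle_trans; [apply Rmax_r|exact Ht]).
    set (a := z (t - delta)).
    assert (Ha : 0 < a) by (apply Hzp; lra).
    set (c := C * (delta / 2 * (K' * a))).
    assert (Hlow : forall s, t - delta / 2 <= s <= t ->
              delta / 2 * (K' * a) <= RInt (fun s => f (z s)) (s - delta) s).
    { intros s Hs.
      rewrite <- (RInt_Chasles (V:=R_CompleteNormedModule) _ (s - delta) (t - delta) s);
        [|apply Hexfz; lra|apply Hexfz; lra].
      rewrite <- (RInt_Chasles (V:=R_CompleteNormedModule) _ (t - delta) (t - delta / 2) s);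
        [|apply Hexfz; lra|apply Hexfz; lra].
      assert (H1 := Hnn (s - delta) (t - delta) ltac:(lra) ltac:(lra)).
      assert (H3 := Hnn (t - delta / 2) s ltac:(lra) ltac:(lra)).
      assert (H2 : delta / 2 * (K' * a) <=
                   RInt (fun s => f (z s)) (t - delta) (t - delta / 2)).
      { replace (delta / 2 * (K' * a)) with
          (RInt (fun _ => K' * a) (t - delta) (t - delta / 2))
          by (rewrite RInt_const_R; replace (t - delta / 2 - (t - delta)) with (delta / 2) by field; reflexivity).
        apply RInt_le. lra. apply ex_RInt_const. apply Hexfz; lra.
        intros u Hu.
        assert (Hzu : Rabs N + 1 <= z u) by (apply HT1; lra).
        assert (Hzu0 : 0 < z u) by (apply Hzp; lra).
        assert (HNu : N < z u) by (pose proof (Rle_abs N); lra).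
        assert (HH := HN (z u) HNu).
        assert (Hau : a <= z u) by (apply Hmono; lra).
        apply Rlt_le in HH.
        assert (K' * z u <= f (z u)).
        { apply (Rmult_le_compat_r (z u)) in HH; [|lra].
          unfold Rdiv in HH. rewrite Rmult_assoc, Rinv_l in HH by lra. lra. }
        nra. }
      simpl. unfold plus; simpl. lra. }
    assert (Hm := mvt_lb z (fun t => C * RInt (fun s => f (z s)) (t - delta) t)
                  (t - delta / 2) t c ltac:(lra)).
    assert (c * (t - (t - delta / 2)) <= z t - z (t - delta / 2)).
    { apply Hm. intros x Hx. apply Hder; lra.
      intros x Hx. unfold c. apply Rmult_le_compat_l. lra. apply Hlow. lra. }
    assert (z (t - delta) <= z (t - delta / 2)) by (apply Hmono; lra).
    assert (c * (t - (t - delta / 2)) = K * a).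
    { unfold c, K'. field. split; lra. }
    unfold a in *. lra. }
  destruct Hasym as [phi [_ [Hphipos [Hphiinc Hphilim]]]].
  destruct (lim_ball _ 1 (1/2) ltac:(lra) Hphilim) as [M0 HM0].
  set (M := Rmax M0 1).
  assert (HM1 : 1 <= M) by apply Rmax_r.
  assert (Hfphi : forall x, M < x -> 1/2 * phi x <= f x <= 3/2 * phi x).
  { intros x Hx. assert (HMx : M0 < x) by (pose proof (Rmax_l M0 1); unfold M in Hx; lra).
    assert (H := HM0 x HMx). assert (Hp : 0 < phi x) by (apply Hphipos; lra).
    apply Rabs_def2 in H.
    assert (f x = f x / phi x * phi x) by (field; lra).
    split; nra. }
  intros P HP. simpl in HP. destruct HP as [eps Heps].
  assert (He := cond_pos eps).
  set (c := Rabs (Fbar M)).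
  assert (Hc0 : 0 <= c) by apply Rabs_pos.
  assert (HphiM : 0 < phi M) by (apply Hphipos; lra).
  destruct (Hgrow (6 / eps) ltac:(apply Rdiv_lt_0_compat; lra)) as [T2 HT2].
  set (A := c * (1 + eps) / phi M + M + 1).
  destruct (Hinf A) as [T3 HT3].
  simpl. exists (Rmax T2 (T3 + delta)). intros t Ht.
  apply Heps.
  assert (Ht2 : T2 <= t) by (pose proof (Rmax_l T2 (T3 + delta)); lra).
  assert (Ht3 : T3 <= t - delta) by (pose proof (Rmax_r T2 (T3 + delta)); lra).
  set (a := z (t - delta)). set (b := z t).
  assert (HaA : A <= a) by (apply HT3; exact Ht3).
  assert (Hab : 6 / eps * a <= b - a) by (apply HT2; exact Ht2).
  assert (HcA : 0 <= c * (1 + eps) / phi M).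
  { apply Rdiv_le_0_compat; nra. }
  assert (HaM : M < a) by (unfold A in HaA; lra).
  assert (Hphia : phi M < phi a) by (apply Hphiinc; lra).
  assert (Hb : a < b).
  { assert (0 < 6 / eps * a) by (apply Rmult_lt_0_compat; [apply Rdiv_lt_0_compat|]; lra). lra. }
  rewrite (Fbar_chasles f Fbar M a) by (auto; lra).
  rewrite (Fbar_chasles f Fbar a b) by (auto; lra).
  rewrite (Fbar_chasles f Fbar M a) by (auto; lra).
  set (I1 := RInt f M a). set (I2 := RInt f a b).
  assert (HI1 : 0 <= I1).
  { apply RInt_ge_0. lra. apply Hexf; lra. intros x Hx. left. apply Hfpos. lra. }
  assert (HI1' : I1 <= (a - M) * (3/2 * phi a)).
  { unfold I1. rewrite <- RInt_const_R. apply RInt_le. lra. apply Hexf; lra.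
    apply ex_RInt_const. intros x Hx.
    assert (phi x < phi a) by (apply Hphiinc; lra).
    pose proof (Hfphi x ltac:(lra)). lra. }
  assert (HI2 : (b - a) * (1/2 * phi a) <= I2).
  { unfold I2. rewrite <- RInt_const_R. apply RInt_le. lra. apply ex_RInt_const.
    apply Hexf; lra. intros x Hx.
    assert (phi a < phi x) by (apply Hphiinc; lra).
    pose proof (Hfphi x ltac:(lra)). lra. }
  set (Pa := a * phi a).
  assert (HP1 : c * (1 + eps) < Pa).
  { unfold Pa.
    assert (c * (1 + eps) = c * (1 + eps) / phi M * phi M) by (field; lra).
    assert (c * (1 + eps) / phi M < a) by (unfold A in HaA; lra).
    nra. }
  assert (HPa0 : 0 < Pa) by (unfold Pa; apply Rmult_lt_0_compat; lra).
  assert (HI2' : 3 * Pa <= eps * I2).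
  { assert (6 / eps * a * (1/2 * phi a) <= (b - a) * (1/2 * phi a)).
    { apply Rmult_le_compat_r. lra. lra. }
    assert (eps * (6 / eps * a * (1/2 * phi a)) = 3 * Pa) by (unfold Pa; field; lra).
    nra. }
  assert (HFM : - c <= Fbar M <= c) by (apply Rabs_le_between; unfold c; lra).
  assert (HI1'' : I1 <= 3/2 * Pa) by (unfold Pa in *; nra).
  set (Fa := Fbar M + I1). set (Fb := Fbar M + I1 + I2).
  assert (Hlt : Fa < eps * Fb) by (unfold Fa, Fb; nra).
  assert (Hgt : - (eps * Fb) < Fa) by (unfold Fa, Fb; nra).
  assert (HFb : 0 < Fb) by nra.
  change (Rabs (Fa / Fb - 0) < eps).
  rewrite Rminus_0_r. apply Rabs_def1.
  - apply Rmult_lt_reg_r with Fb; auto. unfold Rdiv. rewrite Rmult_assoc, Rinv_l by lra. lra.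
  - apply Rmult_lt_reg_r with Fb; auto. unfold Rdiv. rewrite Rmult_assoc, Rinv_l by lra. lra.
Qed.
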